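(* Let $n\ge 3$ and let $s,t\in S_n$ be such that the commutator $[s,t]=sts^{-1}t^{-1}$ is the $3$-cycle $(z\;y\;x)$ (i.e. $z\mapsto y\mapsto x\mapsto z$), with $x,y,z$ distinct. Then exactly one of the following holds: (a) $x,y,z$ lie in the same cycle of $s$, in this cyclic order, i.e. $d_s(x,y)+d_s(y,z)+d_s(z,x)=d_s(x,x)$; (b) for some cyclic relabeling $(x',y',z')$ of $(x,y,z)$ (one of $(x,y,z)$, $(y,z,x)$, $(z,x,y)$, so that $(z'\;y'\;x')=(z\;y\;x)$), the points $x'$ and $y'$ lie in the same cycle of $s$, the point $z'$ lies in a different cycle of $s$, and $d_s(z',z')=d_s(y',x')$.
   Context: Permutations are composed as functions: $(st)(i)=s(t(i))$. For $s\in S_n$, the $s$-distance $d_s:\{1,\dots,n\}^2\to\mathbb{N}\cup\{\infty\}$ is defined by $d_s(u,v)=\min\{d\ge 1: s^d(u)=v\}$ if $u,v$ lie in the same cycle of $s$, and $d_s(u,v)=\infty$ otherwise. In particular $d_s(u,u)$ is the length of the cycle of $s$ containing $u$. *)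

(* Defs.v *)
From mathcomp Require Import all_boot all_fingroup.
From Stdlib Require Import ClassicalEpsilon.
Set Implicit Arguments. Unset Strict Implicit. Unset Printing Implicit Defensive.

(* Note: mathcomp's group product on perms is left-to-right
   ((s * t) i = t (s i)); to avoid confusion, the commutator is stated
   pointwise in the theorem as s (t (s^-1 (t^-1 i))). *)

Definition ds_pred n (s : 'S_n) (u v : 'I_n) : pred nat :=
  fun d => (0 < d) && ((s ^+ d)%g u == v).

(* s-distance: Some (min{d >= 1 : s^d u = v}) if such d exists, None (= infinity) otherwise *)
Definition ds n (s : 'S_n) (u v : 'I_n) : option nat :=
  match excluded_middle_informative (exists d, ds_pred s u v d) with
  | left H => Some (ex_minn H)
  | right _ => None
  end.

Definition cyc3 n (z y x : 'I_n) (i : 'I_n) : 'I_n :=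
  if i == z then y else if i == y then x else if i == x then z else i.

Definition cond_a n (s : 'S_n) (x y z : 'I_n) : Prop :=
  exists a b c e, [/\ ds s x y = Some a, ds s y z = Some b, ds s z x = Some c,
                      ds s x x = Some e & a + b + c = e].

Definition cond_b1 n (s : 'S_n) (x' y' z' : 'I_n) : Prop :=
  [/\ ds s x' y' <> None, ds s x' z' = None & ds s z' z' = ds s y' x'].

Definition cond_b n (s : 'S_n) (x y z : 'I_n) : Prop :=
  cond_b1 s x y z \/ cond_b1 s y z x \/ cond_b1 s z x y.

(* Main.v *)
Require Import Defs.
From mathcomp Require Import all_boot all_fingroup.
From mathcomp Require Import zify.
From Stdlib Require Import Classical ClassicalEpsilon.
Set Implicit Arguments. Unset Strict Implicit. Unset Printing Implicit Defensive.

Section Gen.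
Variable T : finType.
Implicit Types (g h : {perm T}) (u v : T).

Lemma ord_ex g u : exists d, (0 < d) && (iter d g u == u).
Proof. exists #[g]%g; rewrite order_gt0 -permX expg_order perm1 eqxx. by []. Qed.

Definition ord g u := ex_minn (ord_ex g u).

Lemma ord_spec g u : [/\ 0 < ord g u, iter (ord g u) g u = u &
   forall d, 0 < d -> iter d g u = u -> ord g u <= d].
Proof.
rewrite /ord; case: ex_minnP => m /andP[m0 /eqP Hm] Hmin; split => //.
by move=> d d0 Hd; apply: Hmin; rewrite d0 Hd eqxx.
Qed.

Lemma ord_gt0 g u : 0 < ord g u. Proof. by case: (ord_spec g u). Qed.
Lemma iter_ord g u : iter (ord g u) g u = u. Proof. by case: (ord_spec g u). Qed.
Lemma ord_le g u d : 0 < d -> iter d g u = u -> ord g u <= d.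
Proof. by case: (ord_spec g u) => _ _; apply. Qed.
Lemma ord_min g u k : 0 < k -> k < ord g u -> iter k g u <> u.
Proof. move=> k0 kl E; have := ord_le k0 E; lia. Qed.
Lemma ord_eq g u K : 0 < K -> iter K g u = u ->
  (forall k, 0 < k -> k < K -> iter k g u <> u) -> ord g u = K.
Proof.
move=> K0 HK Hmin; apply/eqP; rewrite eqn_leq ord_le //=.
case: (leqP K (ord g u)) => // lt; exfalso.
by apply: (Hmin _ (ord_gt0 g u) lt); apply: iter_ord.
Qed.

Lemma iter_mul_ord g u c : iter (c * ord g u) g u = u.
Proof. elim: c => [//|c IH]; by rewrite mulSn iterD IH iter_ord. Qed.

Lemma iter_mod g u k : iter k g u = iter (k %% ord g u) g u.
Proof. by rewrite {1}(divn_eq k (ord g u)) addnC iterD iter_mul_ord. Qed.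

Lemma iter_inj g u a b : a < ord g u -> b < ord g u -> iter a g u = iter b g u -> a = b.
Proof.
wlog ab : a b / a <= b.
  move=> W al bl E; case: (leqP a b) => ab; first exact: W.
  by symmetry; apply: W => //; lia.
move=> al bl E; case: (ltngtP a b) => // lt; exfalso.
have : iter (b - a) g u = u.
  apply: (@perm_inj _ ((g ^+ a)%g)); rewrite !permX -(iterD a (b - a)) subnKC //.
by apply: ord_min; lia.
lia.
Qed.

Lemma iter_comm g u k l : iter k g (iter l g u) = iter l g (iter k g u).
Proof. by rewrite -!iterD addnC. Qed.

Lemma ord_iter g u k : ord g (iter k g u) = ord g u.
Proof.
apply: ord_eq; first exact: ord_gt0.
  by rewrite iter_comm iter_ord.
move=> j j0 jl E; apply: (ord_min j0 jl).
apply: (@perm_inj _ ((g ^+ k)%g)); by rewrite !permX iter_comm.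
Qed.

Lemma conn_sym g u v k : iter k g u = v -> exists j, iter j g v = u.
Proof.
move=> E; exists (k * ord g u - k).
rewrite -E -iterD.
have: k <= k * ord g u by have := ord_gt0 g u; nia.
move=> H; rewrite subnK //; exact: iter_mul_ord.
Qed.

Lemma conn_lt g u v k : iter k g u = v -> exists2 j, j < ord g u & iter j g u = v.
Proof. move=> E; exists (k %% ord g u); first by rewrite ltn_mod ord_gt0. by rewrite -iter_mod. Qed.

End Gen.

Section DS.
Variable n : nat.
Implicit Types (g h : 'S_n) (u v : 'I_n).

Lemma dsE g u v d : ds g u v = Some d <->
  [/\ 0 < d, iter d g u = v & forall k, 0 < k -> k < d -> iter k g u <> v].
Proof.
rewrite /ds; case: excluded_middle_informative => H.
  case: ex_minnP => m /andP[m0]; rewrite permX => /eqP Hm Hmin; split.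
    case=> <-; split => // k k0 kl E.
    have := Hmin k; rewrite /ds_pred k0 permX E eqxx => /(_ isT); lia.
  case=> d0 Hd Hmn; congr Some; apply/eqP; rewrite eqn_leq Hmin; last first.
    by rewrite /ds_pred d0 permX Hd eqxx.
  case: (leqP d m) => // lt; exfalso; exact: (Hmn m m0 lt Hm).
split => // -[d0 Hd _]; case: H; exists d; by rewrite /ds_pred d0 permX Hd eqxx.
Qed.

Lemma dsN g u v : ds g u v = None <-> forall k, 0 < k -> iter k g u <> v.
Proof.
rewrite /ds; case: excluded_middle_informative => H; split => //.
- move=> Hn; exfalso; case: H => d; rewrite /ds_pred permX => /andP[d0 /eqP E]; exact: (Hn d d0 E).
- move=> _ k k0 E; apply: H; exists k; by rewrite /ds_pred k0 permX E eqxx.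
Qed.

Lemma ds_self g u : ds g u u = Some (ord g u).
Proof. apply/dsE; split; [exact: ord_gt0 | exact: iter_ord | move=> k k0 kl; exact: ord_min]. Qed.

Lemma ds_lt g u v d : ds g u v = Some d -> u <> v -> d < ord g u.
Proof.
move/dsE => [d0 Hd Hmin] uv.
case: (ltngtP d (ord g u)) => // H; last by rewrite H iter_ord in Hd.
exfalso; apply: (Hmin (d - ord g u)); [lia | have := ord_gt0 g u; lia |].
by rewrite -Hd -{2}(subnK (ltnW H)) iterD iter_ord.
Qed.

Lemma ds_some_ex g u v : ds g u v <> None -> exists d, ds g u v = Some d.
Proof. by case: (ds g u v) => [d|] // _; exists d. Qed.

Lemma dsN_all g u v : ds g u v = None -> u <> v -> forall k, iter k g u <> v.
Proof. move/dsN => H uv [|k] //; exact: H. Qed.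

End DS.

Section Arc.
Variable n : nat.
Variables (X Y Z : 'I_n) (g h : 'S_n).
Hypothesis dXY : X != Y.
Hypothesis dYZ : Y != Z.
Hypothesis dXZ : X != Z.
Hypothesis Hh : forall j, h j = cyc3 X Y Z (g j).

Definition notin3 (j : 'I_n) := [&& j != X, j != Y & j != Z].

Lemma cyc_out j : notin3 j -> cyc3 X Y Z j = j.
Proof. by case/and3P => a b c; rewrite /cyc3 (negbTE a) (negbTE b) (negbTE c). Qed.
Lemma cycX : cyc3 X Y Z X = Y. Proof. by rewrite /cyc3 eqxx. Qed.
Lemma cycY : cyc3 X Y Z Y = Z. Proof. by rewrite /cyc3 eq_sym (negbTE dXY) eqxx. Qed.
Lemma cycZ : cyc3 X Y Z Z = X.
Proof. by rewrite /cyc3 eq_sym (negbTE dXZ) eq_sym (negbTE dYZ) eqxx. Qed.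

Lemma arc1 u k : (forall m, 0 < m -> m <= k -> notin3 (iter m g u)) ->
  iter k h u = iter k g u.
Proof.
elim: k => [//|k IH] H.
rewrite !iterS IH; last by move=> m m0 mk; apply: H; lia.
by rewrite Hh -iterS cyc_out //; apply: H.
Qed.

Lemma arc2 u K : 0 < K -> (forall m, 0 < m -> m < K -> notin3 (iter m g u)) ->
  iter K h u = cyc3 X Y Z (iter K g u).
Proof.
case: K => [//|K] _ H; rewrite !iterS Hh arc1 // => m m0 mk; apply: H; lia.
Qed.

Lemma unaff u : (forall m, iter m g u <> X) -> (forall m, iter m g u <> Y) ->
  (forall m, iter m g u <> Z) -> ord h u = ord g u.
Proof.
move=> H1 H2 H3.
have E : forall k, iter k h u = iter k g u.
  move=> k; apply: arc1 => m _ _; apply/and3P; split; apply/eqP; by [apply: H1|apply: H2|apply: H3].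
apply: ord_eq; first exact: ord_gt0.
  by rewrite E iter_ord.
by move=> k k0 kl; rewrite E; apply: ord_min.
Qed.

Lemma ord_reach (f : 'S_n) u w m : iter m f u = w -> ord f u = ord f w.
Proof. by move=> <-; rewrite ord_iter. Qed.

Lemma unaff_ord u : ord g u <> ord g X -> ord g u <> ord g Y -> ord g u <> ord g Z ->
  ord h u = ord g u.
Proof.
move=> a b c; apply: unaff => m E; [apply: a|apply: b|apply: c]; exact: ord_reach E.
Qed.

Lemma pos_ne (f : 'S_n) u a b : a < ord f u -> b < ord f u -> a <> b -> iter a f u <> iter b f u.
Proof. by move=> al bl ab E; apply: ab; apply: iter_inj E. Qed.


Lemma nin_at u j a b c : iter a g u = X -> iter b g u = Y -> iter c g u = Z ->
  a < ord g u -> b < ord g u -> c < ord g u -> j < ord g u ->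
  j <> a -> j <> b -> j <> c -> notin3 (iter j g u).
Proof.
move=> Ea Eb Ec al bl cl jl ja jb jc; apply/and3P; split; apply/eqP.
- by rewrite -Ea; apply: pos_ne.
- by rewrite -Eb; apply: pos_ne.
- by rewrite -Ec; apply: pos_ne.
Qed.

Definition S (f : 'S_n) L := [set i | ord f i == L].

Lemma core1 P p : ds g X Z = Some P -> ds g X Y = Some p -> P < p ->
  exists L, #|S g L| != #|S h L|.
Proof.
move=> HP Hp Pp.
have pm : p < ord g X by apply: (ds_lt Hp); apply/eqP.
case/dsE: HP => P0 HZ _; case/dsE: Hp => p0 HY _.
have HX : iter 0 g X = X by [].
have o0 := ord_gt0 g X.
have ZE k : iter k g Z = iter (k + P) g X by rewrite -HZ -iterD.
have YE k : iter k g Y = iter (k + p) g X by rewrite -HY -iterD.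
have arcX j : j < P -> iter j h X = iter j g X.
  move=> jl; apply: arc1 => m' m0 ml; apply: (nin_at HX HY HZ); lia.
have hX : iter P h X = X.
  rewrite arc2 // ?HZ ?cycZ // => m' m0 ml; apply: (nin_at HX HY HZ); lia.
have arcZ j : j < p - P -> iter j h Z = iter j g Z.
  move=> jl; apply: arc1 => m' m0 ml; rewrite ZE; apply: (nin_at HX HY HZ); lia.
have hZ : iter (p - P) h Z = Z.
  rewrite arc2; last (by move=> m' m0 ml; rewrite ZE; apply: (nin_at HX HY HZ); lia); last lia.
  by rewrite ZE subnK ?HY ?cycY //; lia.
have arcY j : j < ord g X - p -> iter j h Y = iter j g Y.
  move=> jl; apply: arc1 => m' m0 ml; rewrite YE; apply: (nin_at HX HY HZ); lia.
have hY : iter (ord g X - p) h Y = Y.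
  rewrite arc2; last (by move=> m' m0 ml; rewrite YE; apply: (nin_at HX HY HZ); lia); last lia.
  by rewrite YE subnK ?iter_ord ?cycX //; lia.
have oX : ord h X <= P by apply: ord_le.
have oZ : ord h Z <= p - P by apply: ord_le => //; lia.
have oY : ord h Y <= ord g X - p by apply: ord_le => //; lia.
exists (ord g X).
suff : #|S h (ord g X)| < #|S g (ord g X)| by lia.
apply: proper_card; apply/properP; split; last first.
  exists X; rewrite !inE ?eqxx //; apply/eqP; lia.
apply/subsetP => i; rewrite !inE => /eqP Hi.
case: (classic (exists k, iter k g i = X)) => [[k Ek]|NX].
  exfalso; have [j Ej] := conn_sym Ek; have [j' jl Ej'] := conn_lt Ej.
  case: (ltnP j' P) => [jP|Pj].
    have : ord h i = ord h X by rewrite -Ej' -arcX ?ord_iter //; lia.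
    lia.
  case: (ltnP j' p) => [jp|pj].
    have : ord h i = ord h Z.
      by rewrite -Ej' -(subnK Pj) -ZE -arcZ ?ord_iter //; lia.
    lia.
  have : ord h i = ord h Y.
    by rewrite -Ej' -(subnK pj) -YE -arcY ?ord_iter //; lia.
  lia.
have {}NX : forall k, iter k g i <> X by move=> k E; apply: NX; exists k.
have NY : forall k, iter k g i <> Y.
  move=> k E; apply: (NX ((ord g X - p) + k)); rewrite iterD E YE subnK ?iter_ord //; lia.
have NZ : forall k, iter k g i <> Z.
  move=> k E; apply: (NX ((ord g X - P) + k)); rewrite iterD E ZE subnK ?iter_ord //; lia.
by rewrite -(unaff NX NY NZ) Hi.
Qed.

Lemma core2 p : ds g X Y = Some p -> ds g X Z = None -> ds g Z Z <> ds g Y X ->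
  exists L, #|S g L| != #|S h L|.
Proof.
move=> Hp HXZ Hne.
have pm : p < ord g X by apply: (ds_lt Hp); apply/eqP.
case/dsE: Hp => p0 HY _.
have o0 := ord_gt0 g X.
have nXZ : forall k, iter k g X <> Z by apply: dsN_all => //; apply/eqP.
have nZX : forall k, iter k g Z <> X.
  by move=> k E; have [j Ej] := conn_sym E; exact: (nXZ j).
have YE k : iter k g Y = iter (k + p) g X by rewrite -HY -iterD.
have nYZ : forall k, iter k g Y <> Z by move=> k; rewrite YE.
have nZY : forall k, iter k g Z <> Y.
  by move=> k E; have [j Ej] := conn_sym E; exact: (nYZ j).
have HYX : ds g Y X = Some (ord g X - p).
  apply/dsE; split; first lia.
    by rewrite YE subnK ?iter_ord //; lia.
  move=> k k0 kl; rewrite YE -{2}[X]/(iter 0 g X); apply: pos_ne; lia.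
have r0 := ord_gt0 g Z.
have rq : ord g Z <> ord g X - p by move=> E; apply: Hne; rewrite HYX ds_self E.
have arcX j : j < p -> iter j h X = iter j g X.
  move=> jl; apply: arc1 => m' m0 ml; apply/and3P; split; apply/eqP; last exact: nXZ.
    rewrite -{2}[X]/(iter 0 g X); apply: pos_ne; lia.
  rewrite -HY; apply: pos_ne; lia.
have hX : iter p h X = Z.
  rewrite arc2 // ?HY ?cycY // => m' m0 ml; apply/and3P; split; apply/eqP; last exact: nXZ.
    rewrite -{2}[X]/(iter 0 g X); apply: pos_ne; lia.
  rewrite -HY; apply: pos_ne; lia.
have ninY m' : 0 < m' -> m' < ord g X - p -> notin3 (iter m' g Y).
  move=> m0 ml; apply/and3P; split; apply/eqP; last exact: nYZ.
    rewrite YE -{2}[X]/(iter 0 g X); apply: pos_ne; lia.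
  rewrite YE -HY; apply: pos_ne; lia.
have arcY j : j < ord g X - p -> iter j h Y = iter j g Y.
  move=> jl; apply: arc1 => m' m0 ml; apply: ninY; lia.
have hY : iter (ord g X - p) h Y = Y.
  rewrite arc2; [|lia|by move=> m' m0 ml; apply: ninY].
  by rewrite YE subnK ?iter_ord ?cycX //; lia.
have ninZ m' : 0 < m' -> m' < ord g Z -> notin3 (iter m' g Z).
  move=> m0 ml; apply/and3P; split; apply/eqP; [exact: nZX|exact: nZY|exact: ord_min].
have arcZ j : j < ord g Z -> iter j h Z = iter j g Z.
  move=> jl; apply: arc1 => m' m0 ml; apply: ninZ; lia.
have hZ : iter (ord g Z) h Z = X.
  by rewrite arc2 // ?iter_ord ?cycZ // => m' m0 ml; apply: ninZ.
have hXX : iter (ord g Z + p) h X = X by rewrite iterD hX hZ.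
have oX : ord h X <= ord g Z + p by apply: ord_le => //; lia.
have oY : ord h Y <= ord g X - p by apply: ord_le => //; lia.
have oXZ : ord h X = ord h Z by apply: ord_reach hX.
have oXY : ord g X = ord g Y by apply: ord_reach HY.
case: (ltngtP (ord g Z) (ord g X - p)) => [rq'|qr|//].
- exists (ord g X).
  suff : #|S h (ord g X)| < #|S g (ord g X)| by lia.
  apply: proper_card; apply/properP; split; last first.
    exists X; rewrite !inE ?eqxx //; apply/eqP; lia.
  apply/subsetP => i; rewrite !inE => /eqP Hi.
  case: (classic (exists k, iter k g i = X)) => [[k Ek]|NX].
    exfalso; have [j Ej] := conn_sym Ek; have [j' jl Ej'] := conn_lt Ej.
    case: (ltnP j' p) => [jp|pj].
      have : ord h i = ord h X by rewrite -Ej' -arcX ?ord_iter //; lia.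
      lia.
    have : ord h i = ord h Y.
      by rewrite -Ej' -(subnK pj) -YE -arcY ?ord_iter //; lia.
    lia.
  case: (classic (exists k, iter k g i = Z)) => [[k Ek]|NZ].
    exfalso; have [j Ej] := conn_sym Ek; have [j' jl Ej'] := conn_lt Ej.
    have : ord h i = ord h Z by rewrite -Ej' -arcZ ?ord_iter //; lia.
    lia.
  have {}NX : forall k, iter k g i <> X by move=> k E; apply: NX; exists k.
  have {}NZ : forall k, iter k g i <> Z by move=> k E; apply: NZ; exists k.
  have NY : forall k, iter k g i <> Y.
    move=> k E; apply: (NX ((ord g X - p) + k)); rewrite iterD E YE subnK ?iter_ord //; lia.
  by rewrite -(unaff NX NY NZ) Hi.
- have ohX : ord h X = ord g Z + p.
    apply: ord_eq => //; first lia.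
    move=> k k0 kl; case: (ltnP k p) => [kp|pk].
      rewrite arcX // -{2}[X]/(iter 0 g X); apply: pos_ne; lia.
    rewrite -(subnK pk) iterD hX arcZ; [exact: nZX | lia].
  exists (ord g Z + p).
  suff : #|S g (ord g Z + p)| < #|S h (ord g Z + p)| by lia.
  apply: proper_card; apply/properP; split; last first.
    exists X; rewrite !inE ?ohX ?eqxx //; apply/eqP; lia.
  apply/subsetP => i; rewrite !inE => /eqP Hi.
  rewrite unaff_ord ?Hi //; lia.
Qed.

Lemma core3 : (forall k, iter k g X <> Y) -> (forall k, iter k g X <> Z) ->
  (forall k, iter k g Y <> Z) -> exists L, #|S g L| != #|S h L|.
Proof.
move=> nXY nXZ nYZ.
have nYX : forall k, iter k g Y <> X.
  by move=> k E; have [j Ej] := conn_sym E; exact: (nXY j).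
have nZX : forall k, iter k g Z <> X.
  by move=> k E; have [j Ej] := conn_sym E; exact: (nXZ j).
have nZY : forall k, iter k g Z <> Y.
  by move=> k E; have [j Ej] := conn_sym E; exact: (nYZ j).
have p0 := ord_gt0 g X; have q0 := ord_gt0 g Y; have r0 := ord_gt0 g Z.
have ninX m' : 0 < m' -> m' < ord g X -> notin3 (iter m' g X).
  move=> m0 ml; apply/and3P; split; apply/eqP; [exact: ord_min|exact: nXY|exact: nXZ].
have ninY m' : 0 < m' -> m' < ord g Y -> notin3 (iter m' g Y).
  move=> m0 ml; apply/and3P; split; apply/eqP; [exact: nYX|exact: ord_min|exact: nYZ].
have ninZ m' : 0 < m' -> m' < ord g Z -> notin3 (iter m' g Z).
  move=> m0 ml; apply/and3P; split; apply/eqP; [exact: nZX|exact: nZY|exact: ord_min].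
have arcX j : j < ord g X -> iter j h X = iter j g X.
  move=> jl; apply: arc1 => m' m0 ml; apply: ninX; lia.
have arcY j : j < ord g Y -> iter j h Y = iter j g Y.
  move=> jl; apply: arc1 => m' m0 ml; apply: ninY; lia.
have arcZ j : j < ord g Z -> iter j h Z = iter j g Z.
  move=> jl; apply: arc1 => m' m0 ml; apply: ninZ; lia.
have hX : iter (ord g X) h X = Y by rewrite arc2 // ?iter_ord ?cycX // => m' m0 ml; apply: ninX.
have hY : iter (ord g Y) h Y = Z by rewrite arc2 // ?iter_ord ?cycY // => m' m0 ml; apply: ninY.
have hZ : iter (ord g Z) h Z = X by rewrite arc2 // ?iter_ord ?cycZ // => m' m0 ml; apply: ninZ.
have ohX : ord h X = ord g Z + (ord g Y + ord g X).
  apply: ord_eq; first lia.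
    by rewrite !iterD hX hY hZ.
  move=> k k0 kl; case: (ltnP k (ord g X)) => [kp|pk].
    rewrite arcX //; exact: ord_min.
  case: (ltnP k (ord g Y + ord g X)) => [kq|qk].
    rewrite -(subnK pk) iterD hX arcY; [exact: nYX | lia].
  rewrite -(subnK qk) iterD iterD hX hY arcZ; [exact: nZX | lia].
exists (ord g Z + (ord g Y + ord g X)).
suff : #|S g (ord g Z + (ord g Y + ord g X))| < #|S h (ord g Z + (ord g Y + ord g X))| by lia.
apply: proper_card; apply/properP; split; last first.
  exists X; rewrite !inE ?ohX ?eqxx //; apply/eqP; lia.
apply/subsetP => i; rewrite !inE => /eqP Hi.
rewrite unaff_ord ?Hi //; lia.
Qed.

End Arc.

Lemma cyc3_rot n (X Y Z j : 'I_n) : X != Y -> Y != Z -> X != Z ->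
  cyc3 X Y Z j = cyc3 Y Z X j.
Proof.
move=> a b c; rewrite /cyc3; repeat (case: eqP => ?; try subst);
  by rewrite ?eqxx in a b c *.
Qed.

Lemma cyc3K n (X Y Z j : 'I_n) : X != Y -> Y != Z -> X != Z ->
  cyc3 X Y Z (cyc3 Z Y X j) = j.
Proof.
move=> a b c; have a' : Y != X by rewrite eq_sym.
have b' : Z != Y by rewrite eq_sym. have c' : Z != X by rewrite eq_sym.
case: (eqVneq j Z)=>[->|jZ]; [|case: (eqVneq j Y)=>[->|jY]; [|case: (eqVneq j X)=>[->|jX]]];
 rewrite /cyc3 ?eqxx ?(negbTE jZ) ?(negbTE jY) ?(negbTE jX) ?(negbTE a) ?(negbTE b) ?(negbTE c)
   ?(negbTE a') ?(negbTE b') ?(negbTE c') ?eqxx ?(negbTE jZ) ?(negbTE jY) //.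
Qed.

Theorem lemma1 (n : nat) (hn : 3 <= n) (s t : 'S_n) (x y z : 'I_n)
  (hxy : x != y) (hyz : y != z) (hxz : x != z)
  (hcomm : forall i : 'I_n, s (t ((s^-1)%g ((t^-1)%g i))) = cyc3 z y x i) :
  (cond_a s x y z /\ ~ cond_b s x y z) \/ (~ cond_a s x y z /\ cond_b s x y z).
Proof.
pose h := (t^-1 * s * t)%g.
have hh : forall j, h j = cyc3 x y z (s j).
  move=> j; rewrite /h !permM.
  have := hcomm (t (s ((t^-1)%g j))); rewrite !permK permKV => ->.
  by rewrite cyc3K.
have hiter : forall k j, iter k h (t j) = t (iter k s j).
  elim=> [//|k IH] j; rewrite !iterS IH /h !permM permK.
  by [].
have hconj : forall j, ord h (t j) = ord s j.
  move=> j; apply: ord_eq; first exact: ord_gt0.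
    by rewrite hiter iter_ord.
  by move=> k k0 kl; rewrite hiter => /perm_inj; apply: ord_min.
have card : forall L, #|S s L| = #|S h L|.
  move=> L; rewrite -[RHS](card_preimset _ (@perm_inj _ t)); apply: eq_card => j.
  by rewrite !inE hconj.
have nocard : forall L, #|S s L| != #|S h L| -> False by move=> L; rewrite card eqxx.
have hyx : y != x by rewrite eq_sym.
have hzy : z != y by rewrite eq_sym.
have hzx : z != x by rewrite eq_sym.
have hh2 : forall j, h j = cyc3 y z x (s j) by move=> j; rewrite hh cyc3_rot.
have hh3 : forall j, h j = cyc3 z x y (s j) by move=> j; rewrite hh2 cyc3_rot.
have trans : forall u v w a b, ds s u v = Some a -> ds s v w = Some b -> ds s u w <> None.
  move=> u v w a b /dsE [a0 Ha _] /dsE [b0 Hb _] /dsN H.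
  by apply: (H (b + a)); [lia | rewrite iterD Ha Hb].
have exclusive : cond_a s x y z -> ~ cond_b s x y z.
  case=> a [b [c [e [Ha Hb Hc _ _]]]] [|[]] [_ H _].
  - exact: trans Ha Hb H.
  - exact: trans Hb Hc H.
  - exact: trans Hc Ha H.
case: (classic (cond_a s x y z)) => Ha; [left; split => //; exact: exclusive | right; split => //].
apply: NNPP => nb.
case Exy: (ds s x y) => [p|]; case Exz: (ds s x z) => [P|].
-
  have pm : p < ord s x by apply: (ds_lt Exy); apply/eqP.
  have Pm : P < ord s x by apply: (ds_lt Exz); apply/eqP.
  case/dsE: (Exy) => p0 HY Hpmin; case/dsE: (Exz) => P0 HZ HPmin.
  case: (ltngtP p P) => [pP|Pp|pP].
  + apply: Ha; exists p, (P - p), (ord s x - P), (ord s x); split => //.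
    * apply/dsE; split; first lia.
        by rewrite -HY -iterD subnK // ltnW.
      move=> k k0 kl; rewrite -HY -iterD -HZ; apply: pos_ne; lia.
    * apply/dsE; split; first lia.
        by rewrite -HZ -iterD subnK ?iter_ord // ltnW.
      move=> k k0 kl; rewrite -HZ -iterD -{2}[x]/(iter 0 s x); apply: pos_ne; lia.
    * exact: ds_self.
    * lia.
  + by have [L HL] := core1 hxy hyz hxz hh Exz Exy Pp; apply: (nocard L).
  + by move: hyz; rewrite -HY -HZ pP eqxx.
-
  have H3 : ds s z z <> ds s y x.
    move=> E; apply: nb; left; split => //; by rewrite Exy.
  by have [L HL] := core2 hxy hyz hxz hh Exy Exz H3; apply: (nocard L).
-
  have nZX : ds s z x <> None.
    move/dsN => H; case/dsE: Exz => P0 HZ _.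
    have [j Ej] := conn_sym HZ; case: j Ej => [/= E|j Ej]; first by move: hzx; rewrite E eqxx.
    exact: (H j.+1).
  have [p' Ezx] := ds_some_ex nZX.
  have Ezy : ds s z y = None.
    apply/dsN => k k0 E; case/dsE: Exz => P0 HZ _.
    by move/dsN: Exy => /(_ (k + P)); apply; [lia | rewrite iterD HZ].
  have H3 : ds s y y <> ds s x z.
    move=> E; apply: nb; right; right; split => //; by rewrite Ezx.
  by have [L HL] := core2 hzx hxy hzy hh3 Ezx Ezy H3; apply: (nocard L).
- case Eyz: (ds s y z) => [p|].
  + have Eyx : ds s y x = None.
      apply/dsN => k k0 E; have [j Ej] := conn_sym E.
      case: j Ej => [/= E'|j Ej]; first by move: hxy; rewrite E' eqxx.
      by move/dsN: Exy => /(_ j.+1); apply.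
    have H3 : ds s x x <> ds s z y.
      move=> E; apply: nb; right; left; split => //; by rewrite Eyz.
    by have [L HL] := core2 hyz hzx hyx hh2 Eyz Eyx H3; apply: (nocard L).
  + have nxy : x <> y by apply/eqP.
    have nxz : x <> z by apply/eqP.
    have nyz : y <> z by apply/eqP.
    have [L HL] := core3 hxy hyz hxz hh (dsN_all Exy nxy)
        (dsN_all Exz nxz) (dsN_all Eyz nyz).
    exact: (nocard L).
Qed.
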